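(* For every integer $n\geqslant1$, \[ \sum_{k=0}^{n-1}\frac{(2k+1)^{2}}{(n-k)^{2}(n+k+1)^{2}} =\frac{\pi^{2}}{6}-\frac{2\gamma}{2n+1}-\frac{2}{2n+1}\psi(2n+1)-\psi_{1}(2n+1). \]
   Context: $\psi=\Gamma'/\Gamma$ is the digamma function, $\psi_1=\psi'$ the trigamma function, and $\gamma$ the Euler–Mascheroni constant. *)

(* Defs.v *)
From Stdlib Require Import Reals.
From Coquelicot Require Import Coquelicot.
Open Scope R_scope.

Definition Gamma (x : R) : R :=
  RInt_gen (fun t => Rpower t (x - 1) * exp (- t))
           (at_right 0) (Rbar_locally p_infty).

Definition digamma (x : R) : R := Derive Gamma x / Gamma x.

Definition trigamma (x : R) : R := Derive digamma x.

Definition harmonic (m : nat) : R := sum_f_R0 (fun k => / INR (S k)) (pred m).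
Definition euler_gamma : R :=
  real (Lim_seq (fun m => harmonic m - ln (INR m))).

(* Main.v *)
Require Import Defs.
From Stdlib Require Import Reals Lra Lia Factorial.
From Coquelicot Require Import Coquelicot.
Open Scope R_scope.

Ltac Req := match goal with |- ?a = ?b => change (@eq R a b) end.

Definition FA := at_right 0.
Definition FB := Rbar_locally p_infty.
Definition IG (f : R -> R) (l : R) := is_RInt_gen f FA FB l.

Lemma FA_proper : ProperFilter FA. Proof. apply at_right_proper_filter. Qed.
Lemma FB_proper : ProperFilter FB. Proof. apply Rbar_locally_filter. Qed.
Lemma FP_proper : ProperFilter (filter_prod FA FB).
Proof. exact (@filter_prod_proper _ _ FA FB FA_proper FB_proper). Qed.

Lemma FA_ev (c : R) : 0 < c -> FA (fun a => 0 < a < c).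
Proof.
  intros Hc. exists (mkposreal c Hc). intros y Hy Hp. simpl in Hy.
  unfold ball in Hy; simpl in Hy; unfold AbsRing_ball, abs, minus, plus, opp in Hy; simpl in Hy.
  apply Rabs_lt_between in Hy. lra.
Qed.

Lemma FB_ev (c : R) : FB (fun b => c < b).
Proof. exists c. auto. Qed.

Lemma FP_ev : filter_prod FA FB (fun ab => 0 < fst ab < 1 /\ 2 < snd ab).
Proof.
  apply (Filter_prod _ _ _ (fun a => 0 < a < 1) (fun b => 2 < b)).
  apply FA_ev; lra. apply FB_ev. intros; simpl; auto.
Qed.

Lemma FP_and (P Q : R * R -> Prop) : filter_prod FA FB P -> filter_prod FA FB Q ->
  filter_prod FA FB (fun ab => P ab /\ Q ab).
Proof. intros. apply filter_and; auto. Qed.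

Lemma FP_imp (P Q : R * R -> Prop) : filter_prod FA FB P -> (forall ab, P ab -> Q ab) ->
  filter_prod FA FB Q.
Proof. intros H1 H2. apply (filter_imp P); auto. Qed.

Lemma cont_of_deriv (f : R -> R) x : ex_derive f x -> continuous f x.
Proof. intro H. exact (@ex_derive_continuous R_AbsRing R_NormedModule f x H). Qed.

Lemma RInt_uniqR (f : R -> R) a b l : is_RInt f a b l -> RInt f a b = l.
Proof. intro H. exact (@is_RInt_unique R_CompleteNormedModule f a b l H). Qed.
Lemma ex_RInt_contR (f : R -> R) a b : (forall z, Rmin a b <= z <= Rmax a b -> continuous f z) -> ex_RInt f a b.
Proof. intro H. exact (@ex_RInt_continuous R_CompleteNormedModule f a b H). Qed.
Lemma RInt_correctR (f : R -> R) a b : ex_RInt f a b -> is_RInt f a b (RInt f a b).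
Proof. intro H. exact (@RInt_correct R_CompleteNormedModule f a b H). Qed.

Definition contpos (f : R -> R) := forall t, 0 < t -> continuous f t.

Lemma contpos_ex (f : R -> R) a b : contpos f -> 0 < a -> 0 < b -> ex_RInt f a b.
Proof.
  intros Hf Ha Hb. apply ex_RInt_contR. intros z Hz. apply Hf.
  apply Rlt_le_trans with (Rmin a b); [|lra]. apply Rmin_glb_lt; auto.
Qed.

Lemma FA_proper' : ProperFilter' FA. Proof. apply Proper_StrongProper, FA_proper. Qed.
Lemma FB_proper' : ProperFilter' FB. Proof. apply Proper_StrongProper, FB_proper. Qed.
Lemma FA_filter : Filter FA. Proof. apply FA_proper. Qed.
Lemma FB_filter : Filter FB. Proof. apply FB_proper. Qed.

Lemma IG_lin (f g : R -> R) al be lf lg : IG f lf -> IG g lg ->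
  IG (fun t => al * f t + be * g t) (al * lf + be * lg).
Proof.
  intros Hf Hg.
  exact (@is_RInt_gen_plus R_NormedModule FA FB FA_filter FB_filter _ _ _ _
    (@is_RInt_gen_scal R_NormedModule FA FB FA_filter FB_filter _ al _ Hf)
    (@is_RInt_gen_scal R_NormedModule FA FB FA_filter FB_filter _ be _ Hg)).
Qed.

Lemma IG_scal (f : R -> R) al lf : IG f lf -> IG (fun t => al * f t) (al * lf).
Proof.
  intros Hf. exact (@is_RInt_gen_scal R_NormedModule FA FB FA_filter FB_filter _ al _ Hf).
Qed.

Lemma IG_ext (f g : R -> R) l : (forall t, 0 < t -> f t = g t) -> IG f l -> IG g l.
Proof.
  intros Hfg Hf. apply (@is_RInt_gen_ext R_NormedModule FA FB FA_filter FB_filter f g l); auto.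
  apply (FP_imp _ _ FP_ev). intros [a b] [Ha Hb] x Hx. simpl in *. apply Hfg.
  apply Rle_lt_trans with (Rmin a b); [|lra]. apply Rmin_glb; lra.
Qed.

Lemma IG_uniq (f : R -> R) l1 l2 : IG f l1 -> IG f l2 -> l1 = l2.
Proof.
  intros H1 H2.
  rewrite <- (@is_RInt_gen_unique R_CompleteNormedModule FA FB FA_proper' FB_proper' f l1 H1).
  exact (@is_RInt_gen_unique R_CompleteNormedModule FA FB FA_proper' FB_proper' f l2 H2).
Qed.

Lemma IG_RInt_gen (f : R -> R) l : IG f l -> RInt_gen f FA FB = l.
Proof. intros H. exact (@is_RInt_gen_unique R_CompleteNormedModule FA FB FA_proper' FB_proper' f l H). Qed.

Lemma IG_norm (f g : R -> R) lf lg : (forall t, 0 < t -> Rabs (f t) <= g t) -> IG f lf -> IG g lg ->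
  Rabs lf <= lg.
Proof.
  intros Hb Hf Hg.
  apply (@RInt_gen_norm R_CompleteNormedModule FA FB FA_proper FB_proper f g lf lg); auto.
  all: apply (FP_imp _ _ FP_ev); intros [a b] [Ha Hb']; simpl in *; try lra; intros x Hx; apply Hb; lra.
Qed.

Lemma IG_le (f g : R -> R) lf lg : (forall t, 0 < t -> f t <= g t) -> IG f lf -> IG g lg -> lf <= lg.
Proof.
  intros Hb Hf Hg.
  assert (H0 : IG (fun t => 0 * f t) (0 * lf)) by (apply IG_scal; auto).
  assert (H1 : IG (fun t => 1 * g t + (-1) * f t) (1 * lg + (-1) * lf)) by (apply IG_lin; auto).
  assert (H2 := IG_norm (fun t => 0 * f t) (fun t => 1 * g t + (-1) * f t) _ _ ltac:(intros t Ht; cbv beta; rewrite Rmult_0_l, Rabs_R0; specialize (Hb t Ht); lra) H0 H1).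
  rewrite Rmult_0_l, Rabs_R0 in H2. lra.
Qed.

Lemma ballR (x y : R) (e : R) : ball x e y <-> Rabs (y - x) < e.
Proof. unfold ball; simpl; unfold AbsRing_ball, abs, minus, plus, opp; simpl. tauto. Qed.

Lemma RInt_abs_dom (f g : R -> R) u v : contpos f -> contpos g ->
  (forall t, 0 < t -> Rabs (f t) <= g t) -> 0 < u -> 0 < v ->
  Rabs (RInt f u v) <= Rabs (RInt g u v).
Proof.
  intros Hf Hg Hb Hu Hv.
  assert (K : forall a b, 0 < a -> 0 < b -> a <= b -> Rabs (RInt f a b) <= Rabs (RInt g a b)).
  { intros a b Ha Hb' Hab.
    apply Rle_trans with (RInt (fun t => Rabs (f t)) a b).
    apply abs_RInt_le; auto. apply contpos_ex; auto.
    apply Rle_trans with (RInt g a b).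
    apply RInt_le; auto.
    apply ex_RInt_contR. intros z Hz. apply (continuous_comp f Rabs). apply Hf.
      apply Rlt_le_trans with (Rmin a b); [|lra]. apply Rmin_glb_lt; auto.
      apply continuous_Rabs.
    apply contpos_ex; auto.
    intros x Hx. apply Hb. lra.
    apply Rle_abs. }
  destruct (Rle_or_lt u v). apply K; auto.
  rewrite <- (opp_RInt_swap f), <- (opp_RInt_swap g). unfold opp; simpl.
  rewrite !Rabs_Ropp. apply K; auto; lra.
  apply contpos_ex; auto. apply contpos_ex; auto.
Qed.

Lemma IG_dom (f g : R -> R) lg : contpos f -> contpos g ->
  (forall t, 0 < t -> Rabs (f t) <= g t) -> IG g lg -> exists l, IG f l.
Proof.
  intros Hf Hg Hb HG.
  assert (Cg : forall eps : posreal, exists P : R * R -> Prop, filter_prod FA FB P /\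
     (forall u v, P u -> P v -> forall u' v', is_RInt g (fst u) (snd u) u' ->
         is_RInt g (fst v) (snd v) v' -> ball u' eps v')).
  { apply (@filterlimi_locally_cauchy (R*R) R_CompleteSpace _ FP_proper).
    - apply (FP_imp _ _ FP_ev). intros [a b] [Ha Hb']; simpl in *. split.
      exists (RInt g a b). apply RInt_correctR. apply contpos_ex; auto; lra.
      intros y1 y2 H1 H2. apply RInt_uniqR in H1. apply RInt_uniqR in H2. congruence.
    - exists lg. exact HG. }
  apply (@filterlimi_locally_cauchy (R*R) R_CompleteSpace _ FP_proper).
  - apply (FP_imp _ _ FP_ev). intros [a b] [Ha Hb']; simpl in *. split.
    exists (RInt f a b). apply RInt_correctR. apply contpos_ex; auto; lra.
    intros y1 y2 H1 H2. apply RInt_uniqR in H1. apply RInt_uniqR in H2. congruence.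
  - intros eps.
    assert (He2 : 0 < eps / 2) by (destruct eps; simpl; lra).
    destruct (Cg (mkposreal _ He2)) as [P [[Qa Qb HQa HQb HP] HPc]].
    exists (fun ab => (Qa (fst ab) /\ 0 < fst ab < 1) /\ (Qb (snd ab) /\ 2 < snd ab)).
    split.
    + apply (Filter_prod _ _ _ (fun a => Qa a /\ 0 < a < 1) (fun b => Qb b /\ 2 < b)).
      apply filter_and; auto. apply FA_ev; lra.
      apply filter_and; auto. apply FB_ev.
      intros; simpl; auto.
    + intros [a b] [a' b'] [[Ha1 Ha2] [Hb1 Hb2]] [[Ha1' Ha2'] [Hb1' Hb2']] u' v' Hu Hv.
      simpl in *. apply RInt_uniqR in Hu. apply RInt_uniqR in Hv. subst u' v'.
      apply ballR.
      assert (exf : forall x y, 0 < x -> 0 < y -> ex_RInt f x y) by (intros; apply contpos_ex; auto).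
      assert (exg : forall x y, 0 < x -> 0 < y -> ex_RInt g x y) by (intros; apply contpos_ex; auto).
      assert (E : RInt f a' b' - RInt f a b = RInt f a' a + RInt f b b').
      { rewrite <- (RInt_Chasles f a' a b') by (apply exf; lra).
        rewrite <- (RInt_Chasles f a b b') by (apply exf; lra).
        unfold plus; simpl. ring. }
      rewrite E.
      assert (G1 : Rabs (RInt g a' a) < eps/2).
      { assert (H := HPc (a', b) (a, b) (HP _ _ Ha1' Hb1) (HP _ _ Ha1 Hb1) _ _
           (RInt_correctR _ _ _ (exg a' b ltac:(lra) ltac:(lra)))
           (RInt_correctR _ _ _ (exg a b ltac:(lra) ltac:(lra)))).
        unfold ball in H; simpl in H; unfold AbsRing_ball, abs, minus, plus, opp in H; simpl in H.
        rewrite <- (RInt_Chasles g a' a b) in H by (apply exg; lra).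
        unfold plus in H; simpl in H.
        replace (RInt g a b + - (RInt g a' a + RInt g a b)) with (- RInt g a' a) in H by ring.
        rewrite Rabs_Ropp in H. exact H. }
      assert (G2 : Rabs (RInt g b b') < eps/2).
      { assert (H := HPc (a', b) (a', b') (HP _ _ Ha1' Hb1) (HP _ _ Ha1' Hb1') _ _
           (RInt_correctR _ _ _ (exg a' b ltac:(lra) ltac:(lra)))
           (RInt_correctR _ _ _ (exg a' b' ltac:(lra) ltac:(lra)))).
        unfold ball in H; simpl in H; unfold AbsRing_ball, abs, minus, plus, opp in H; simpl in H.
        rewrite <- (RInt_Chasles g a' b b') in H by (apply exg; lra).
        unfold plus in H; simpl in H.
        rewrite Rplus_comm, <- Rplus_assoc, Rplus_opp_l, Rplus_0_l in H.
        exact H. }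
      assert (F1 := RInt_abs_dom f g a' a Hf Hg Hb ltac:(lra) ltac:(lra)).
      assert (F2 := RInt_abs_dom f g b b' Hf Hg Hb ltac:(lra) ltac:(lra)).
      apply Rle_lt_trans with (Rabs (RInt f a' a) + Rabs (RInt f b b')).
      apply Rabs_triang. lra.
Qed.



Lemma is_RInt_eq_val (f : R -> R) a b (l l' : R) : l = l' -> is_RInt f a b l -> is_RInt f a b l'.
Proof. intros ->; auto. Qed.


Lemma is_RInt_lin2 (f g : R -> R) a b al be lf lg :
  is_RInt f a b lf -> is_RInt g a b lg ->
  is_RInt (fun x => al * f x + be * g x) a b (al * lf + be * lg).
Proof.
  intros Hf Hg.
  exact (@is_RInt_plus R_NormedModule _ _ a b _ _ (@is_RInt_scal R_NormedModule _ a b al lf Hf) (@is_RInt_scal R_NormedModule _ a b be lg Hg)).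
Qed.
Lemma RInt_lin2 (f g : R -> R) a b al be :
  ex_RInt f a b -> ex_RInt g a b ->
  RInt (fun x => al * f x + be * g x) a b = al * RInt f a b + be * RInt g a b.
Proof.
  intros Hf Hg. apply RInt_uniqR. apply is_RInt_lin2; apply RInt_correctR; auto.
Qed.

Definition cA (k : nat) := fun x => cos x ^ (2*k).
Definition cB (k : nat) := fun x => x^2 * cos x ^ (2*k).
Definition AA k : R := RInt (cA k) 0 (PI/2).
Definition BB k : R := RInt (cB k) 0 (PI/2).

Lemma exA k : ex_RInt (cA k) 0 (PI/2).
Proof. apply (@ex_RInt_continuous R_CompleteNormedModule); intros; apply cont_of_deriv; unfold cA; auto_derive; auto. Qed.
Lemma exB k : ex_RInt (cB k) 0 (PI/2).
Proof. apply (@ex_RInt_continuous R_CompleteNormedModule); intros; apply cont_of_deriv; unfold cB; auto_derive; auto. Qed.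

Lemma pow_pred_mul y m : y * y ^ Init.Nat.pred m * INR m = INR m * y ^ m.
Proof. destruct m; simpl; ring. Qed.

Lemma cos_pow2S m x : cos x ^ (2 * S m) = cos x ^ (2*m) * (cos x * cos x).
Proof. replace (2 * S m)%nat with (2*m + 2)%nat by lia. rewrite pow_add. simpl. ring. Qed.

Lemma rec1 m : INR (2*m+2) * AA (S m) - INR (2*m+1) * AA m = 0.
Proof.
  assert (H := is_RInt_derive (fun x => sin x * cos x ^ (2*m+1))
    (fun x => INR (2*m+2) * cA (S m) x - INR (2*m+1) * cA m x) 0 (PI/2)).
  assert (H' : is_RInt (fun x => INR (2*m+2) * cA (S m) x - INR (2*m+1) * cA m x) 0 (PI/2) 0).
  { assert (E : minus (sin (PI/2) * cos (PI/2) ^ (2*m+1)) (sin 0 * cos 0 ^ (2*m+1)) = 0).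
    { rewrite cos_PI2, sin_0, pow_i by lia. unfold minus, plus, opp; simpl; ring. }
    apply (is_RInt_eq_val _ _ _ _ _ E). apply H.
    - intros x _. auto_derive; auto. unfold cA.
      replace (m + (m + 0) + 1)%nat with (S (2*m)) by lia.
      rewrite cos_pow2S. simpl Init.Nat.pred. rewrite !S_INR, !plus_INR, !mult_INR. simpl.
      replace (cos x ^ S (2*m)) with (cos x * cos x ^ (2*m)) by reflexivity.
      assert (Hs := sin2_cos2 x). unfold Rsqr in Hs. simpl INR.
      replace (INR (2 * m + 2)) with (2 * INR m + 2) by (rewrite plus_INR, mult_INR; simpl; ring).
      replace (INR (2 * m + 1)) with (2 * INR m + 1) by (rewrite plus_INR, mult_INR; simpl; ring).
      assert (H0 : sin x * sin x + cos x * cos x - 1 = 0) by lra.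
      apply Rminus_diag_uniq.
      transitivity (-((2 * INR m + 1) * cos x ^ (m + (m + 0))) * (sin x * sin x + cos x * cos x - 1)); [ring | rewrite H0; ring].
    - intros x _. apply cont_of_deriv. unfold cA. auto_derive; auto. }
  apply RInt_uniqR in H'.
  rewrite <- H'. unfold AA.
  replace (INR (2 * m + 2) * RInt (cA (S m)) 0 (PI / 2) - INR (2 * m + 1) * RInt (cA m) 0 (PI / 2))
   with (INR (2 * m + 2) * RInt (cA (S m)) 0 (PI / 2) + (- INR (2 * m + 1)) * RInt (cA m) 0 (PI / 2)) by ring.
  rewrite <- RInt_lin2 by apply exA. apply RInt_ext. intros. Req; ring.
Qed.

Lemma rec2 m : AA (S m) + INR (m+1) * INR (2*m+2) * BB (S m) - INR (m+1) * INR (2*m+1) * BB m = 0.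
Proof.
  assert (H := is_RInt_derive (fun x => x * cos x ^ (2 * S m) + INR (m+1) * x^2 * sin x * cos x ^ (2*m+1))
    (fun x => cA (S m) x + INR (m+1) * INR (2*m+2) * cB (S m) x - INR (m+1) * INR (2*m+1) * cB m x) 0 (PI/2)).
  assert (H' : is_RInt (fun x => cA (S m) x + INR (m+1) * INR (2*m+2) * cB (S m) x - INR (m+1) * INR (2*m+1) * cB m x) 0 (PI/2) 0).
  { assert (E : minus (PI/2 * cos (PI/2) ^ (2 * S m) + INR (m+1) * (PI/2)^2 * sin (PI/2) * cos (PI/2) ^ (2*m+1))
                      (0 * cos 0 ^ (2 * S m) + INR (m+1) * 0^2 * sin 0 * cos 0 ^ (2*m+1)) = 0).
    { rewrite cos_PI2, sin_0, !pow_i by lia. unfold minus, plus, opp; simpl; ring. }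
    apply (is_RInt_eq_val _ _ _ _ _ E). apply H.
    - intros x _. auto_derive; auto. unfold cA, cB.
      match goal with |- context [match ?n with 0%nat => 1 | S _ => INR ?n + 1 end] =>
        change (match n with 0%nat => 1 | S _ => INR n + 1 end) with (INR (S n)) end.
      replace (m + S (m + 0))%nat with (S (2*m)) by lia.
      replace (m + (m + 0) + 1)%nat with (S (2*m)) by lia.
      replace (2 * S m)%nat with (S (S (2*m))) by lia.
      simpl Init.Nat.pred.
      rewrite <- !tech_pow_Rmult. rewrite !S_INR, !plus_INR, !mult_INR. simpl INR.
      assert (H0 : sin x * sin x + cos x * cos x - 1 = 0) by (generalize (sin2_cos2 x); unfold Rsqr; lra).
      apply Rminus_diag_uniq. change (m + (m + 0))%nat with (2*m)%nat.
      transitivity (-((INR m + 1) * (2 * INR m + 1) * x * x * cos x ^ (2*m)) * (sin x * sin x + cos x * cos x - 1)); [ring | rewrite H0; ring].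
    - intros x _. apply cont_of_deriv. unfold cA, cB. auto_derive; auto. }
  apply RInt_uniqR in H'.
  rewrite <- H'. unfold AA, BB.
  set (al := INR (m + 1) * INR (2 * m + 2)). set (be := INR (m + 1) * INR (2 * m + 1)).
  rewrite (RInt_ext (fun x => cA (S m) x + al * cB (S m) x - be * cB m x) (fun x => 1 * cA (S m) x + 1 * (al * cB (S m) x + (- be) * cB m x))).
  2:{ intros. Req; ring. }
  rewrite RInt_lin2. rewrite RInt_lin2. Req; ring.
  apply exB. apply exB. apply exA.
  eexists. apply is_RInt_lin2; apply RInt_correctR; apply exB.
Qed.
Lemma sin_lb_x3 x : 0 <= x <= 2 -> x / 3 <= sin_lb x.
Proof.
  intros H. unfold sin_lb, sin_approx. cbn [sum_f_R0]. unfold sin_term.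
  replace (INR (Factorial.fact (2*0+1)%nat)) with 1 by (rewrite INR_IZR_INZ; reflexivity).
  replace (INR (Factorial.fact (2*1+1)%nat)) with 6 by (rewrite INR_IZR_INZ; reflexivity).
  replace (INR (Factorial.fact (2*2+1)%nat)) with 120 by (rewrite INR_IZR_INZ; reflexivity).
  replace (INR (Factorial.fact (2*3+1)%nat)) with 5040 by (rewrite INR_IZR_INZ; reflexivity).
  simpl pow.
  assert (0 <= x*x <= 4) by nra.
  assert (H1 : 0 <= x * (2/3 - x*x/6)) by (apply Rmult_le_pos; lra).
  assert (H2 : 0 <= (x*x*x*x*x) * (1/120 - x*x/5040)).
  { apply Rmult_le_pos; [|lra]. assert (0 <= x*x*x*x) by nra. nra. }
  lra.
Qed.

Lemma A0 : AA 0 = PI/2.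
Proof.
  unfold AA. rewrite (RInt_ext (cA 0) (fun _ => 1)). 2:{ intros. unfold cA. simpl. reflexivity. }
  rewrite RInt_const. unfold scal; simpl; unfold mult; simpl. ring.
Qed.

Lemma B0 : BB 0 = PI^3/24.
Proof.
  unfold BB.
  assert (H := is_RInt_derive (fun x => x^3/3) (cB 0) 0 (PI/2)).
  apply RInt_uniqR. replace (PI^3/24) with (minus ((PI/2)^3/3) (0^3/3)).
  2:{ unfold minus, plus, opp; simpl. field. }
  apply H.
  - intros x _. auto_derive; auto. unfold cB. simpl. field.
  - intros x _. apply cont_of_deriv. unfold cB. auto_derive; auto.
Qed.

Lemma INR_2m1 m : INR (2*m+1) = 2 * INR m + 1.
Proof. rewrite plus_INR, mult_INR; simpl; ring. Qed.
Lemma INR_2m2 m : INR (2*m+2) = 2 * INR m + 2.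
Proof. rewrite plus_INR, mult_INR; simpl; ring. Qed.

Lemma Arec m : AA (S m) = (2 * INR m + 1) / (2 * INR m + 2) * AA m.
Proof.
  assert (H := rec1 m). rewrite INR_2m1, INR_2m2 in H.
  assert (0 <= INR m) by apply pos_INR.
  apply (Rmult_eq_reg_l (2 * INR m + 2)); [|lra]. field_simplify; [|lra]. lra.
Qed.

Lemma Apos n : 0 < AA n.
Proof.
  induction n. rewrite A0. generalize PI_RGT_0; lra.
  rewrite Arec. assert (0 <= INR n) by apply pos_INR.
  apply Rmult_lt_0_compat; auto. apply Rdiv_lt_0_compat; lra.
Qed.

Lemma Bnn n : 0 <= BB n.
Proof.
  unfold BB. apply RInt_ge_0. generalize PI_RGT_0; lra. apply exB.
  intros x Hx. unfold cB. apply Rmult_le_pos. apply pow2_ge_0.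
  rewrite pow_mult. apply pow_le. apply pow2_ge_0.
Qed.

Lemma Bbound n : BB n <= 9 * (AA n - AA (S n)).
Proof.
  unfold BB, AA.
  replace (9 * (RInt (cA n) 0 (PI / 2) - RInt (cA (S n)) 0 (PI / 2))) with
    (9 * RInt (cA n) 0 (PI / 2) + (- 9) * RInt (cA (S n)) 0 (PI / 2)) by ring.
  rewrite <- RInt_lin2 by apply exA.
  apply RInt_le. generalize PI_RGT_0; lra. apply exB.
  eexists; apply is_RInt_lin2; apply RInt_correctR; apply exA.
  intros x Hx. unfold cA, cB. rewrite cos_pow2S.
  assert (Hc : 0 <= cos x ^ (2*n)).
  { rewrite pow_mult. apply pow_le. apply pow2_ge_0. }
  assert (Hs : x / 3 <= sin x).
  { apply Rle_trans with (sin_lb x). apply sin_lb_x3. generalize PI2_3_2 PI_4; lra.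
    apply SIN; generalize PI_RGT_0; lra. }
  assert (H1 := sin2_cos2 x). unfold Rsqr in H1.
  assert (x * x <= 9 * (sin x * sin x)) by nra.
  replace (9 * cos x ^ (2 * n) + -9 * (cos x ^ (2 * n) * (cos x * cos x))) with
     (9 * (sin x * sin x) * cos x ^ (2*n)) by (replace (sin x * sin x) with (1 - cos x * cos x) by lra; ring).
  simpl pow. rewrite Rmult_1_r. apply Rmult_le_compat_r; auto.
Qed.

Lemma div0 a b : a / b = 0 -> b <> 0 -> a = 0.
Proof. intros Hab Hb. unfold Rdiv in Hab. apply Rmult_integral in Hab. destruct Hab as [|Hab]; auto.
  apply Rinv_neq_0_compat in Hb. contradiction. Qed.

Definition TT n := 2 * BB n / AA n.

Lemma tele m : / (INR m + 1)^2 = TT m - TT (S m).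
Proof.
  unfold TT. assert (H := rec2 m). assert (H1 := Arec m).
  assert (Hp := Apos m). assert (Hp' := Apos (S m)). assert (0 <= INR m) by apply pos_INR.
  rewrite INR_2m1, INR_2m2, plus_INR in H. simpl INR in H.
  rewrite H1 in *.
  assert (Hb : BB (S m) = ((INR m+1)*(2*INR m+1)*BB m - (2*INR m+1)/(2*INR m+2)*AA m) / ((INR m+1)*(2*INR m+2))).
  { field_simplify_eq. 2: split; lra. field_simplify in H. 2: lra.
    apply div0 in H; lra. }
  rewrite Hb. field. lra.
Qed.

Lemma TT0 : TT 0 = PI^2/6.
Proof. unfold TT. rewrite A0, B0. field. generalize PI_RGT_0; lra. Qed.

Lemma basel_sum N : sum_f_R0 (fun k => /(INR k+1)^2) N = PI^2/6 - TT (S N).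
Proof.
  induction N.
  - transitivity (/(INR 0+1)^2). reflexivity. rewrite tele, TT0. reflexivity.
  - transitivity (sum_f_R0 (fun k => /(INR k+1)^2) N + /(INR (S N)+1)^2). reflexivity.
    rewrite IHN, (tele (S N)). ring.
Qed.

Lemma TT_bound n : 0 <= TT n <= 9/(INR n + 1).
Proof.
  unfold TT. assert (Hp := Apos n). assert (Hb := Bbound n). assert (Hn := Bnn n).
  rewrite Arec in Hb. assert (0 <= INR n) by apply pos_INR.
  split. apply Rmult_le_pos; [lra | left; apply Rinv_0_lt_compat; auto].
  apply (Rmult_le_reg_r (AA n)); auto.
  unfold Rdiv. rewrite Rmult_assoc, Rinv_l by lra.
  replace (9 * / (INR n + 1) * AA n) with (9 * (AA n - (2 * INR n + 1) / (2 * INR n + 2) * AA n) * 2) by (field; lra).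
  lra.
Qed.

Lemma basel_bound N : 0 <= PI^2/6 - sum_f_R0 (fun k => /(INR k+1)^2) N <= 9/(INR N + 2).
Proof.
  rewrite basel_sum. assert (H := TT_bound (S N)). rewrite S_INR in H.
  replace (INR N + 1 + 1) with (INR N + 2) in H by ring. lra.
Qed.

Lemma exp_small (eps K : R) : 0 < eps -> exists M, forall t, M < t -> K * exp (-(t/2)) < eps.
Proof.
  intros He. destruct (Rle_or_lt K 0) as [HK|HK].
  - exists 0. intros t _. assert (0 < exp (-(t/2))) by apply exp_pos. nra.
  - exists (-2 * ln (eps / K)). intros t Ht.
    assert (H1 : exp (-(t/2)) < eps / K).
    { rewrite <- (exp_ln (eps / K)) by (apply Rdiv_lt_0_compat; auto).
      apply exp_increasing. lra. }
    apply (Rmult_lt_compat_l K) in H1; auto.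
    replace (K * (eps / K)) with eps in H1 by (field; lra). exact H1.
Qed.

Lemma lim_FB0 (f : R -> R) K : (forall t, 0 < t -> Rabs (f t) <= K * exp (-(t/2))) ->
  filterlim f FB (locally 0).
Proof.
  intros Hb. apply (filterlim_locally f 0). intros eps.
  destruct (exp_small eps K (cond_pos eps)) as [M HM].
  exists (Rmax M 0). intros t Ht. apply ballR.
  rewrite Rminus_0_r. apply Rle_lt_trans with (K * exp (-(t/2))).
  apply Hb. apply Rle_lt_trans with (Rmax M 0); auto. apply Rmax_r.
  apply HM. apply Rle_lt_trans with (Rmax M 0); auto. apply Rmax_l.
Qed.

Lemma lim_FA_cont (f : R -> R) : continuous f 0 -> filterlim f FA (locally (f 0)).
Proof.
  intros H. unfold FA, at_right.
  eapply filterlim_filter_le_1. apply (filter_le_within (fun u => 0 < u)). exact H.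
Qed.

Lemma lim_FA_cont' (f : R -> R) l : continuous f 0 -> f 0 = l -> filterlim f FA (locally l).
Proof. intros H E. rewrite <- E. apply lim_FA_cont; auto. Qed.

Definition eh (t : R) := exp (-(t/2)).

Lemma IG_eh : IG eh 2.
Proof.
  assert (Hd : forall t, is_derive (fun t => -2 * exp (-(t/2))) t (eh t)).
  { intros t. unfold eh. auto_derive; auto. Req. set (u := exp _). field. }
  assert (HD : forall t, Derive (fun t => -2 * exp (-(t/2))) t = eh t).
  { intros t. apply is_derive_unique. apply Hd. }
  assert (H := @is_RInt_gen_Derive FA FB FA_filter FB_filter (fun t => -2 * exp (-(t/2))) (-2) 0).
  replace 2 with (0 - -2) by ring.
  apply (IG_ext (Derive (fun t => -2 * exp (-(t/2))))). intros; apply HD.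
  apply H.
  - apply filter_forall. intros; eexists; apply Hd.
  - apply filter_forall. intros ab x _. apply (continuous_ext eh). intros; symmetry; apply HD.
    apply cont_of_deriv. unfold eh. auto_derive; auto.
  - apply lim_FA_cont'. apply cont_of_deriv. auto_derive; auto.
    unfold Rdiv. rewrite Rmult_0_l, Ropp_0, exp_0. ring.
  - apply (lim_FB0 _ 2). intros t Ht. rewrite Rabs_mult.
    assert (E1 : Rabs (-2) = 2) by (rewrite Rabs_left; lra). rewrite E1.
    rewrite Rabs_right. lra. left; apply exp_pos.
Qed.

Lemma ln_le_lin y : 0 < y -> ln y <= y - 1.
Proof. intros Hy. assert (H := exp_ineq1_le (ln y)). rewrite exp_ln in H; lra. Qed.

Lemma exp_mono x y : x <= y -> exp x <= exp y.
Proof. intros [H|H]. left; apply exp_increasing; auto. subst; lra. Qed.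

Lemma PB b c : 0 < b -> 0 < c -> exists K, 0 < K /\ forall t, 0 < t -> exp (b * ln t) <= K * exp (c * t).
Proof.
  intros Hb Hc. set (s := b / c). assert (Hs : 0 < s) by (apply Rdiv_lt_0_compat; auto).
  exists (exp (b * ln s - b)). split. apply exp_pos.
  intros t Ht. rewrite <- exp_plus. apply exp_mono.
  assert (E : ln t = ln s + ln (t / s)).
  { rewrite <- ln_mult by (auto; apply Rdiv_lt_0_compat; auto). f_equal. field. lra. }
  assert (H := ln_le_lin (t / s) ltac:(apply Rdiv_lt_0_compat; auto)).
  rewrite E. replace (c * t) with (b * (t / s)) by (unfold s; field; lra).
  assert (b * ln (t / s) <= b * (t / s - 1)) by (apply Rmult_le_compat_l; lra).
  lra.
Qed.

Definition eh' := eh.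

Lemma dom3 d : 0 < d -> exists K, 0 < K /\ forall t, 0 < t -> (1 + exp (2*d*ln t))^3 * exp(-t) <= K * eh t.
Proof.
  intros Hd. destruct (PB (2*d) (1/6) ltac:(lra) ltac:(lra)) as [K0 [HK0 HP]].
  exists ((1 + K0)^3). split. apply pow_lt; lra.
  intros t Ht. specialize (HP t Ht).
  assert (E1 : 1 <= exp (1/6 * t)) by (apply Rle_trans with (exp 0); [rewrite exp_0; lra | apply exp_mono; lra]).
  assert (H1 : 1 + exp (2 * d * ln t) <= (1 + K0) * exp (1/6 * t)) by (rewrite Rmult_plus_distr_r, Rmult_1_l; lra).
  assert (H0 : 0 <= 1 + exp (2 * d * ln t)) by (generalize (exp_pos (2 * d * ln t)); lra).
  assert (H3 : (1 + exp (2 * d * ln t))^3 <= ((1 + K0) * exp (1/6 * t))^3).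
  { apply pow_incr; auto. }
  unfold eh.
  replace ((1 + K0) ^ 3 * exp (- (t / 2))) with (((1 + K0) * exp (1/6 * t))^3 * exp (-t)).
  apply Rmult_le_compat_r; auto. left; apply exp_pos.
  rewrite Rpow_mult_distr. rewrite Rmult_assoc. f_equal.
  simpl. rewrite Rmult_1_r, <- !exp_plus. f_equal. field.
Qed.

Definition gi x t := Rpower t (x-1) * exp (-t).
Definition g1 x t := Rpower t (x-1) * ln t * exp (-t).

Lemma contpos_gi x : contpos (gi x).
Proof. intros t Ht. apply cont_of_deriv. unfold gi, Rpower. auto_derive. auto. Qed.
Lemma contpos_g1 x : contpos (g1 x).
Proof. intros t Ht. apply cont_of_deriv. unfold g1, Rpower. auto_derive. auto. Qed.
Lemma contpos_eh K : contpos (fun t => K * eh t).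
Proof. intros t Ht. apply cont_of_deriv. unfold eh. auto_derive. auto. Qed.

Lemma exp3 y : exp (3 * y) = exp y ^ 3.
Proof. simpl. rewrite Rmult_1_r, <- !exp_plus. f_equal. ring. Qed.
Lemma exp2 y : exp (2 * y) = exp y ^ 2.
Proof. simpl. rewrite Rmult_1_r, <- !exp_plus. f_equal. ring. Qed.

Lemma y_lt_exp y : y < exp y.
Proof. assert (H := exp_ineq1_le y). lra. Qed.

Lemma exp_abs y : exp (Rabs y) <= exp y + / exp y.
Proof.
  assert (0 < exp y) by apply exp_pos. assert (0 < / exp y) by (apply Rinv_0_lt_compat; auto).
  unfold Rabs. destruct (Rcase_abs y). rewrite exp_Ropp. lra. lra.
Qed.

Lemma absL d L : 0 < d -> Rabs L <= (exp (d * L) + / exp (d * L)) / d.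
Proof.
  intros Hd. assert (H1 := y_lt_exp (Rabs (d * L))). assert (H2 := exp_abs (d * L)).
  rewrite Rabs_mult, (Rabs_right d) in H1, H2 by lra.
  apply (Rmult_le_reg_l d); auto. unfold Rdiv. rewrite <- Rmult_assoc, Rinv_r_simpl_m by lra. lra.
Qed.

Lemma exp_taylor u : Rabs (exp u - 1 - u) <= u^2 * exp (Rabs u).
Proof.
  assert (H1 := exp_ineq1_le u). assert (H2 := exp_ineq1_le (-u)).
  assert (Hp := exp_pos u). rewrite exp_Ropp in H2.
  assert (H3 : exp u - 1 - u <= u * (exp u - 1)).
  { apply (Rmult_le_compat_r (exp u)) in H2; [|lra]. rewrite Rinv_l in H2 by lra. nra. }
  rewrite Rabs_right by lra.
  destruct (Rle_or_lt 0 u).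
  - rewrite Rabs_right by lra.
    assert (exp u - 1 <= u * exp u).
    { apply (Rmult_le_compat_r (exp u)) in H2; [|lra]. rewrite Rinv_l in H2 by lra. nra. }
    assert (u * (exp u - 1) <= u * (u * exp u)) by (apply Rmult_le_compat_l; lra). nra.
  - rewrite Rabs_left by lra.
    assert (1 <= exp (-u)) by (rewrite <- exp_0; apply exp_mono; lra).
    assert (u * (exp u - 1) <= u * u) by nra. nra.
Qed.

Section B.
Variables x t : R.
Hypothesis Hx : 1 < x.
Hypothesis Ht : 0 < t.
Let d := (x - 1) / 3.
Let L := ln t.
Let p := exp (d * L).
Let E := exp (-t).

Lemma d_pos : 0 < d. Proof. unfold d; lra. Qed.
Lemma p_pos : 0 < p. Proof. apply exp_pos. Qed.
Lemma E_pos : 0 < E. Proof. apply exp_pos. Qed.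

Lemma Rp_x : Rpower t (x - 1) = p ^ 3.
Proof. unfold Rpower, p, L. rewrite <- exp3. f_equal. unfold d. field. Qed.

Lemma Rp_xh h : Rpower t (x + h - 1) = p ^ 3 * exp (h * L).
Proof. unfold Rpower, p, L. rewrite <- exp3, <- exp_plus. f_equal. unfold d. field. Qed.

Lemma p2 : exp (2 * d * ln t) = p ^ 2.
Proof. unfold p, L. rewrite <- exp2. f_equal. ring. Qed.

Lemma L_bound : Rabs L <= (p + / p) / d.
Proof. apply absL. apply d_pos. Qed.

Lemma bnd_gi : Rabs (gi x t) <= (1 + p^2)^3 * E.
Proof.
  unfold gi. rewrite Rp_x. fold E. assert (H1 := p_pos). assert (H2 := E_pos).
  rewrite Rabs_right. apply Rmult_le_compat_r; [lra|].
  assert (p^3 <= (1 + p^2)^3). { apply pow_incr. split. lra. nra. }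
  lra. left. apply Rmult_lt_0_compat; auto. apply pow_lt; auto.
Qed.

Lemma bnd_g1 : Rabs (g1 x t) <= / d * ((1 + p^2)^3 * E).
Proof.
  unfold g1. rewrite Rp_x. fold E. fold L. assert (H1 := p_pos). assert (H2 := E_pos).
  assert (Hd := d_pos). assert (HL := L_bound).
  rewrite !Rabs_mult, (Rabs_right E), (Rabs_right (p^3)) by (left; try apply pow_lt; auto).
  assert (HL' : p^3 * Rabs L <= / d * (1 + p^2)^3).
  { apply Rle_trans with (p^3 * ((p + /p) / d)). apply Rmult_le_compat_l; auto. left; apply pow_lt; auto.
    replace (p ^ 3 * ((p + / p) / d)) with (/ d * (p^4 + p^2)) by (field; lra).
    apply Rmult_le_compat_l. left; apply Rinv_0_lt_compat; auto.
    assert (0 <= p^2) by (apply pow_le; lra). assert (0 <= p^4) by (apply pow_le; lra).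
    assert (0 <= p^6) by (apply pow_le; lra).
    replace ((1 + p^2)^3) with (1 + 3 * p^2 + 3 * p^4 + p^6) by ring. lra. }
  rewrite <- Rmult_assoc. apply Rmult_le_compat_r; lra.
Qed.

Lemma bnd_D h : Rabs h <= d -> Rabs (gi (x + h) t - gi x t - h * g1 x t) <= h^2 / d^2 * ((1 + p^2)^3 * E).
Proof.
  intros Hh. unfold gi, g1. rewrite Rp_x, Rp_xh. fold E. fold L.
  assert (H1 := p_pos). assert (H2 := E_pos). assert (Hd := d_pos). assert (HL := L_bound).
  replace (p ^ 3 * exp (h * L) * E - p ^ 3 * E - h * (p ^ 3 * L * E)) with
    ((p^3 * E) * (exp (h * L) - 1 - h * L)) by ring.
  rewrite Rabs_mult, (Rabs_right (p^3 * E)) by (left; apply Rmult_lt_0_compat; auto; apply pow_lt; auto).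
  assert (T := exp_taylor (h * L)).
  assert (T2 : exp (Rabs (h * L)) <= p + / p).
  { apply Rle_trans with (exp (Rabs (d * L))). apply exp_mono.
    rewrite !Rabs_mult. rewrite (Rabs_right d) by lra. apply Rmult_le_compat_r. apply Rabs_pos. auto.
    apply exp_abs. }
  assert (T3 : (h * L)^2 <= h^2 * ((p + / p) / d)^2).
  { rewrite Rpow_mult_distr. apply Rmult_le_compat_l. apply pow2_ge_0.
    rewrite <- (pow2_abs L). apply pow_incr. split. apply Rabs_pos. auto. }
  assert (Hip : 0 < / p) by (apply Rinv_0_lt_compat; auto).
  assert (T4 : Rabs (exp (h * L) - 1 - h * L) <= h^2 * ((p + / p) / d)^2 * (p + / p)).
  { apply Rle_trans with ((h * L)^2 * exp (Rabs (h * L))); auto.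
    apply Rmult_le_compat; auto. apply pow2_ge_0. left; apply exp_pos. }
  apply Rle_trans with (p ^ 3 * E * (h ^ 2 * ((p + / p) / d) ^ 2 * (p + / p))).
  apply Rmult_le_compat_l; auto. left; apply Rmult_lt_0_compat; auto; apply pow_lt; auto.
  right. field. split; lra.
Qed.

End B.

Lemma dom_x x : 1 < x -> exists K, 0 < K /\ forall t, 0 < t ->
  (1 + exp ((x-1)/3 * ln t)^2)^3 * exp(-t) <= K * eh t.
Proof.
  intros Hx. destruct (dom3 ((x-1)/3) ltac:(lra)) as [K [HK H]]. exists K. split; auto.
  intros t Ht. rewrite <- p2. apply H; auto.
Qed.

Lemma IG_Keh K : IG (fun t => K * eh t) (K * 2).
Proof. apply IG_scal. apply IG_eh. Qed.

Lemma Gamma_eq x : Gamma x = RInt_gen (gi x) FA FB.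
Proof. reflexivity. Qed.

Lemma IG_gi x : 1 < x -> IG (gi x) (Gamma x).
Proof.
  intros Hx. destruct (dom_x x Hx) as [K [HK H]].
  destruct (IG_dom (gi x) (fun t => K * eh t) (K * 2) (contpos_gi x) (contpos_eh K)) as [l Hl].
  - intros t Ht. eapply Rle_trans. apply bnd_gi; auto. apply H; auto.
  - apply IG_Keh.
  - rewrite Gamma_eq. rewrite (IG_RInt_gen _ _ Hl). exact Hl.
Qed.

Definition G1 x : R := RInt_gen (g1 x) FA FB.

Lemma IG_g1 x : 1 < x -> IG (g1 x) (G1 x).
Proof.
  intros Hx. destruct (dom_x x Hx) as [K [HK H]].
  destruct (IG_dom (g1 x) (fun t => (/ ((x-1)/3) * K) * eh t) (/ ((x-1)/3) * K * 2) (contpos_g1 x) (contpos_eh _)) as [l Hl].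
  - intros t Ht. eapply Rle_trans. apply bnd_g1; auto. rewrite Rmult_assoc. apply Rmult_le_compat_l.
    left; apply Rinv_0_lt_compat; lra. apply H; auto.
  - apply IG_Keh.
  - unfold G1. rewrite (IG_RInt_gen _ _ Hl). exact Hl.
Qed.

Lemma Gamma_D x h : 1 < x -> Rabs h <= (x-1)/3 -> exists K, 0 < K /\
  Rabs (Gamma (x + h) - Gamma x - h * G1 x) <= h^2 * K.
Proof.
Abort.

Lemma Gamma_D x : 1 < x -> exists K, 0 < K /\ forall h, Rabs h <= (x-1)/3 ->
  Rabs (Gamma (x + h) - Gamma x - h * G1 x) <= h^2 * K.
Proof.
  intros Hx. destruct (dom_x x Hx) as [K [HK H]]. set (d := (x-1)/3).
  assert (Hd : 0 < d) by (unfold d; lra).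
  exists (K * 2 / d^2). split. apply Rdiv_lt_0_compat. lra. apply pow_lt; auto.
  intros h Hh.
  assert (Hxh : 1 < x + h) by (apply Rabs_le_between in Hh; unfold d in Hh; lra).
  assert (I1 := IG_lin _ _ 1 (-1) _ _ (IG_gi (x+h) Hxh) (IG_gi x Hx)).
  assert (I2 := IG_lin _ _ 1 (-h) _ _ I1 (IG_g1 x Hx)).
  assert (I3 := IG_Keh (h^2 / d^2 * K)).
  assert (B := IG_norm (fun t => 1 * (1 * gi (x + h) t + -1 * gi x t) + - h * g1 x t) (fun t => h ^ 2 / d ^ 2 * K * eh t) _ _ ltac:(intros t Ht; cbv beta;
     replace (1 * (1 * gi (x + h) t + -1 * gi x t) + - h * g1 x t) with (gi (x + h) t - gi x t - h * g1 x t) by ring;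
     eapply Rle_trans; [apply bnd_D; auto | rewrite Rmult_assoc; apply Rmult_le_compat_l;
       [apply Rmult_le_pos; [apply pow2_ge_0 | left; apply Rinv_0_lt_compat, pow_lt; auto] | apply H; auto]]) I2 I3).
  replace (Gamma (x + h) - Gamma x - h * G1 x) with (1 * (1 * Gamma (x + h) + -1 * Gamma x) + - h * G1 x) by ring.
  eapply Rle_trans. apply B. right. unfold d. field. lra.
Qed.

Lemma Gamma_deriv x : 1 < x -> is_derive Gamma x (G1 x).
Proof.
  intros Hx. apply is_derive_Reals. destruct (Gamma_D x Hx) as [K [HK H]].
  intros eps Heps.
  assert (Hd : 0 < Rmin ((x-1)/3) (eps / (2 * K))).
  { apply Rmin_glb_lt. lra. apply Rdiv_lt_0_compat; lra. }
  exists (mkposreal _ Hd). intros h Hh0 Hh. simpl in Hh.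
  assert (Hh1 : Rabs h <= (x-1)/3) by (left; apply Rlt_le_trans with (1 := Hh); apply Rmin_l).
  assert (Hh2 : Rabs h < eps / (2 * K)) by (apply Rlt_le_trans with (1 := Hh); apply Rmin_r).
  specialize (H h Hh1).
  replace ((Gamma (x + h) - Gamma x) / h - G1 x) with ((Gamma (x + h) - Gamma x - h * G1 x) / h) by (field; auto).
  unfold Rdiv. rewrite Rabs_mult, Rabs_Rinv by auto.
  assert (Ha : 0 < Rabs h) by (apply Rabs_pos_lt; auto).
  apply Rle_lt_trans with (h^2 * K * / Rabs h).
  apply Rmult_le_compat_r; auto. left; apply Rinv_0_lt_compat; auto.
  rewrite <- (pow2_abs h). replace (Rabs h ^ 2 * K * / Rabs h) with (Rabs h * K) by (field; lra).
  apply (Rmult_lt_compat_r K) in Hh2; auto.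
  replace (eps / (2 * K) * K) with (eps / 2) in Hh2 by (field; lra). lra.
Qed.

Lemma locally_pos t : 0 < t -> locally t (fun y => 0 < y).
Proof.
  intros Ht. exists (mkposreal t Ht). intros y Hy. unfold ball in Hy; simpl in Hy; unfold AbsRing_ball, abs, minus, plus, opp in Hy; simpl in Hy.
  apply Rabs_lt_between in Hy. lra.
Qed.

Lemma Rpower_le_self a x : 0 < a < 1 -> 1 <= x -> Rpower a x <= a.
Proof.
  intros Ha Hx. unfold Rpower. rewrite <- (exp_ln a) at 2 by lra. apply exp_mono.
  assert (ln a < 0) by (rewrite <- ln_1; apply ln_increasing; lra). nra.
Qed.

Lemma Gamma_rec x : 1 < x -> Gamma (x + 1) = x * Gamma x.
Proof.
  intros Hx.
  set (F := fun t => - (Rpower t x * exp (- t))).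
  assert (HdF : forall t, 0 < t -> is_derive F t (gi (x+1) t - x * gi x t)).
  { intros t Ht. unfold F, gi, Rpower. auto_derive. auto.
    replace (x + 1 - 1) with x by ring. rewrite Rmult_comm at 1.
    replace (x - 1) with (x + -1) by ring. rewrite Rmult_plus_distr_r, exp_plus.
    replace (-1 * ln t) with (- ln t) by ring. rewrite (exp_Ropp (ln t)), exp_ln by auto.
    field. lra. }
  assert (HD : forall t, 0 < t -> Derive F t = gi (x+1) t - x * gi x t).
  { intros. apply is_derive_unique. auto. }
  assert (I0 : IG (Derive F) (0 - 0)).
  { apply (@is_RInt_gen_Derive FA FB FA_filter FB_filter F 0 0).
    - apply (FP_imp _ _ FP_ev). intros [a b] [Ha Hb] z Hz. simpl in *.
      assert (0 < z) by (apply Rlt_le_trans with (Rmin a b); [apply Rmin_glb_lt; lra | lra]).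
      eexists. apply HdF; auto.
    - apply (FP_imp _ _ FP_ev). intros [a b] [Ha Hb] z Hz. simpl in *.
      assert (Hz0 : 0 < z) by (apply Rlt_le_trans with (Rmin a b); [apply Rmin_glb_lt; lra | lra]).
      apply (continuous_ext_loc _ (fun t => gi (x+1) t - x * gi x t)).
      apply (filter_imp (fun y => 0 < y)). intros; symmetry; apply HD; auto. apply locally_pos; auto.
      apply cont_of_deriv. unfold gi, Rpower. auto_derive. auto.
    - apply (filterlim_locally F 0). intros eps.
      assert (He : 0 < Rmin eps 1) by (apply Rmin_glb_lt; [apply cond_pos | lra]).
      apply (filter_imp (fun a => 0 < a < Rmin eps 1)); [|apply FA_ev; auto].
      intros a Ha. apply ballR. unfold F. rewrite Rminus_0_r, Rabs_Ropp.
      assert (Ha1 : a < 1) by (apply Rlt_le_trans with (1 := proj2 Ha); apply Rmin_r).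
      assert (Ha2 : a < eps) by (apply Rlt_le_trans with (1 := proj2 Ha); apply Rmin_l).
      assert (H1 := Rpower_le_self a x ltac:(lra) ltac:(lra)).
      assert (H2 : exp (- a) <= 1) by (rewrite <- exp_0; apply exp_mono; lra).
      assert (H3 : 0 < exp (-a)) by apply exp_pos. assert (H4 : 0 < Rpower a x) by apply exp_pos.
      rewrite Rabs_right by nra. nra.
    - destruct (dom_x (x+1) ltac:(lra)) as [K [HK H]].
      apply (lim_FB0 _ K). intros t Ht. unfold F. rewrite Rabs_Ropp.
      replace (x + 1 - 1) with x in H by ring. eapply Rle_trans; [|apply H; auto].
      assert (B := bnd_gi (x+1) t). unfold gi in B.
      replace (x + 1 - 1) with x in B by ring. exact B. }
  assert (I1 := IG_lin _ _ 1 (-x) _ _ (IG_gi (x+1) ltac:(lra)) (IG_gi x Hx)).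
  assert (I2 : IG (fun t => 1 * gi (x + 1) t + - x * gi x t) (0 - 0)).
  { apply (IG_ext (Derive F)); auto. intros t Ht. rewrite HD; auto. ring. }
  assert (E := IG_uniq _ _ _ I1 I2). lra.
Qed.

Lemma IG_lim (f : R -> R) l : IG f l -> contpos f ->
  filterlim (fun ab => RInt f (fst ab) (snd ab)) (filter_prod FA FB) (locally l).
Proof.
  intros H Hc. apply (filterlim_locally _ l). intros eps.
  assert (H1 := proj1 (@filterlimi_locally (R*R) R_UniformSpace _ (@filter_prod_filter _ _ FA FB FA_filter FB_filter) _ l) H eps).
  apply (filter_imp (fun ab => (exists z, is_RInt f (fst ab) (snd ab) z /\ ball l eps z) /\ (0 < fst ab < 1 /\ 2 < snd ab))).
  - intros [a b] [[z [Hz Hb]] [Ha Hb']]. simpl in *. apply RInt_uniqR in Hz. subst z. auto.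
  - apply filter_and; auto. apply FP_ev.
Qed.

Lemma IG_lb (f : R -> R) l : IG f l -> contpos f -> (forall t, 0 < t -> 0 <= f t) -> RInt f 1 2 <= l.
Proof.
  intros H Hc Hp.
  assert (L := IG_lim f l H Hc).
  assert (C : filterlim (fun _ : R * R => RInt f 1 2) (filter_prod FA FB) (locally (RInt f 1 2))).
  { apply filterlim_const. }
  assert (R := @filterlim_le (R*R) (filter_prod FA FB) (Proper_StrongProper _ FP_proper) (fun _ => RInt f 1 2) (fun ab => RInt f (fst ab) (snd ab)) (RInt f 1 2) l).
  simpl in R. apply R; auto.
  apply (filter_imp (fun ab => 0 < fst ab < 1 /\ 2 < snd ab)); [|apply FP_ev].
  intros [a b] [Ha Hb]. simpl in *.
  assert (ex : forall u v, 0 < u -> 0 < v -> ex_RInt f u v) by (intros; apply contpos_ex; auto).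
  rewrite <- (RInt_Chasles f a 1 b) by (apply ex; lra).
  rewrite <- (RInt_Chasles f 1 2 b) by (apply ex; lra).
  unfold plus; simpl.
  assert (0 <= RInt f a 1) by (apply RInt_ge_0; [lra | apply ex; lra | intros; apply Hp; lra]).
  assert (0 <= RInt f 2 b) by (apply RInt_ge_0; [lra | apply ex; lra | intros; apply Hp; lra]).
  lra.
Qed.

Lemma gi_pos x t : 0 < t -> 0 < gi x t.
Proof. intros. unfold gi, Rpower. apply Rmult_lt_0_compat; apply exp_pos. Qed.

Lemma Gamma_pos x : 1 < x -> 0 < Gamma x.
Proof.
  intros Hx. apply Rlt_le_trans with (RInt (gi x) 1 2).
  2:{ apply IG_lb. apply IG_gi; auto. apply contpos_gi. intros; left; apply gi_pos; auto. }
  apply Rlt_le_trans with (RInt (fun _ => exp (-2)) 1 2).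
  rewrite RInt_const. unfold scal; simpl; unfold mult; simpl.
  assert (0 < exp (-2)) by apply exp_pos. lra.
  apply RInt_le. lra. apply ex_RInt_const. apply contpos_ex; [apply contpos_gi | lra | lra].
  intros t Ht. unfold gi, Rpower.
  rewrite <- (Rmult_1_l (exp (-2))). apply Rmult_le_compat. lra. left; apply exp_pos.
  apply Rle_trans with (exp 0). rewrite exp_0; lra. apply exp_mono. assert (0 <= ln t) by (rewrite <- ln_1; apply ln_le; lra). nra.
  apply exp_mono. lra.
Qed.


Lemma Gamma_lc x y : 1 < x -> 1 < y -> Gamma ((x + y) / 2) ^ 2 <= Gamma x * Gamma y.
Proof.
  intros Hx Hy. set (m := (x + y) / 2). assert (Hm : 1 < m) by (unfold m; lra).
  assert (Py := Gamma_pos y Hy).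
  set (la := Gamma m / Gamma y).
  assert (I1 := IG_lin _ _ 1 (-2 * la) _ _ (IG_gi x Hx) (IG_gi m Hm)).
  assert (I2 := IG_lin _ _ 1 (la ^ 2) _ _ I1 (IG_gi y Hy)).
  assert (I0 := IG_scal _ 0 _ (IG_gi x Hx)).
  assert (Le := IG_le (fun t => 0 * gi x t) (fun t => 1 * (1 * gi x t + -2 * la * gi m t) + la ^ 2 * gi y t) _ _ ltac:(intros t Ht; cbv beta; rewrite Rmult_0_l;
     unfold gi, Rpower;
     replace ((x - 1) * ln t) with (2 * ((x - 1) / 2 * ln t)) by field;
     replace ((y - 1) * ln t) with (2 * ((y - 1) / 2 * ln t)) by field;
     replace ((m - 1) * ln t) with ((x - 1) / 2 * ln t + (y - 1) / 2 * ln t) by (unfold m; field);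
     rewrite !exp2, exp_plus;
     assert (0 < exp (-t)) by apply exp_pos;
     replace (1 * (1 * (exp ((x - 1) / 2 * ln t) ^ 2 * exp (- t)) +
       -2 * la * (exp ((x - 1) / 2 * ln t) * exp ((y - 1) / 2 * ln t) * exp (- t))) +
       la ^ 2 * (exp ((y - 1) / 2 * ln t) ^ 2 * exp (- t))) with
       ((exp ((x - 1) / 2 * ln t) - la * exp ((y - 1) / 2 * ln t))^2 * exp (-t)) by ring;
     apply Rmult_le_pos; [apply pow2_ge_0 | lra]) I0 I2).
  rewrite Rmult_0_l in Le.
  unfold la in Le. fold m.
  apply (Rmult_le_reg_r (/ Gamma y)). apply Rinv_0_lt_compat; auto.
  replace (Gamma x * Gamma y * / Gamma y) with (Gamma x) by (field; lra).
  replace (Gamma m ^ 2 * / Gamma y) with (Gamma m / Gamma y * Gamma m) by (field; lra).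
  replace (1 * (1 * Gamma x + -2 * (Gamma m / Gamma y) * Gamma m) + (Gamma m / Gamma y) ^ 2 * Gamma y)
   with (Gamma x - Gamma m / Gamma y * Gamma m) in Le by (field; lra).
  lra.
Qed.

Section Conv.
Variable g : R -> R.
Variable a0 x y : R.
Hypothesis Hmid : forall u w, a0 < u -> a0 < w -> 2 * g ((u + w) / 2) <= g u + g w.
Hypothesis Hx : a0 < x.
Hypothesis Hxy : x < y.

Lemma conv_steps (h : R) : 0 < h ->
  forall k : nat, (INR k + 1) * (g (x + h) - g x) <= g (x + (INR k + 1) * h) - g x
    <= (INR k + 1) * (g (x + (INR k + 1) * h) - g (x + INR k * h)).
Proof.
  intros Hh.
  set (a := fun j : nat => g (x + INR j * h)).
  assert (S1 : forall j, a (S j) - a j <= a (S (S j)) - a (S j)).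
  { intros j. unfold a. rewrite !S_INR.
    assert (P : 0 <= INR j) by apply pos_INR.
    assert (H := Hmid (x + INR j * h) (x + (INR j + 1 + 1) * h) ltac:(nra) ltac:(nra)).
    replace ((x + INR j * h + (x + (INR j + 1 + 1) * h)) / 2) with (x + (INR j + 1) * h) in H by field.
    lra. }
  assert (S2 : forall j, a 1%nat - a 0%nat <= a (S j) - a j).
  { induction j. lra. specialize (S1 j). lra. }
  assert (S3 : forall j k, (j <= k)%nat -> a (S j) - a j <= a (S k) - a k).
  { intros j k Hjk. induction Hjk. lra. specialize (S1 m). lra. }
  assert (E0 : a 0%nat = g x) by (unfold a; simpl; f_equal; ring).
  assert (E1 : a 1%nat = g (x + h)) by (unfold a; simpl; f_equal; ring).
  assert (ES : forall k, a (S k) = g (x + (INR k + 1) * h)) by (intros; unfold a; rewrite S_INR; auto).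
  assert (Ek : forall k, a k = g (x + INR k * h)) by (intros; unfold a; auto).
  intros k. rewrite <- E0, <- E1, <- ES, <- Ek.
  induction k.
  - simpl. lra.
  - destruct IHk as [IH1 IH2]. rewrite S_INR. split.
    + specialize (S2 (S k)). lra.
    + specialize (S1 k). assert (0 <= INR k) by apply pos_INR.
      assert ((INR k + 1) * (a (S k) - a k) <= (INR k + 1) * (a (S (S k)) - a (S k))) by (apply Rmult_le_compat_l; lra). lra.
Qed.

Lemma conv_slope dx dy : is_derive g x dx -> is_derive g y dy ->
  dx <= (g y - g x) / (y - x) <= dy.
Proof.
  intros Dx Dy. apply is_derive_Reals in Dx. apply is_derive_Reals in Dy.
  set (Sl := (g y - g x) / (y - x)).
  assert (Key : forall N : nat, (0 < N)%nat ->
     (g (x + (y - x) / INR N) - g x) / ((y - x) / INR N) <= Sl /\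
     Sl <= (g (y + - ((y - x) / INR N)) - g y) / (- ((y - x) / INR N))).
  { intros N HN. destruct N. lia.
    assert (HN' : 0 < INR (S N)) by (apply lt_0_INR; lia).
    set (h := (y - x) / INR (S N)).
    assert (Hh : 0 < h) by (unfold h; apply Rdiv_lt_0_compat; lra).
    destruct (conv_steps h Hh N) as [C1 C2].
    assert (Ey : x + (INR N + 1) * h = y) by (unfold h; rewrite S_INR; field; rewrite <- S_INR; lra).
    assert (Ey' : x + INR N * h = y + - h) by (rewrite <- Ey; ring).
    rewrite Ey in C1, C2. rewrite Ey' in C2.
    assert (Hyx : y - x = (INR N + 1) * h) by lra.
    unfold Sl. rewrite Hyx. split.
    - apply (Rmult_le_reg_r ((INR N + 1) * h)). nra.
      replace ((g (x + h) - g x) / h * ((INR N + 1) * h)) with ((INR N + 1) * (g (x + h) - g x)) by (field; lra).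
      replace ((g y - g x) / ((INR N + 1) * h) * ((INR N + 1) * h)) with (g y - g x) by (field; nra).
      lra.
    - apply (Rmult_le_reg_r ((INR N + 1) * h)). nra.
      replace ((g (y + - h) - g y) / - h * ((INR N + 1) * h)) with ((INR N + 1) * (g y - g (y + - h))) by (field; lra).
      replace ((g y - g x) / ((INR N + 1) * h) * ((INR N + 1) * h)) with (g y - g x) by (field; nra).
      lra. }
  split.
  - destruct (Rle_or_lt dx Sl) as [|Hc]; auto. exfalso.
    destruct (Dx (dx - Sl) ltac:(lra)) as [del Hdel].
    destruct (archimed_cor1 (del / (y - x))) as [N [HN1 HN2]].
    { apply Rdiv_lt_0_compat; [apply cond_pos | lra]. }
    assert (HN' : 0 < INR N) by (apply lt_0_INR; lia).
    assert (Hh : 0 < (y - x) / INR N) by (apply Rdiv_lt_0_compat; lra).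
    assert (Hh2 : (y - x) / INR N < del).
    { apply (Rmult_lt_reg_r (/ (y - x))). apply Rinv_0_lt_compat; lra.
      replace ((y - x) / INR N * / (y - x)) with (/ INR N) by (field; lra). exact HN1. }
    specialize (Hdel ((y - x) / INR N) ltac:(lra) ltac:(rewrite Rabs_right; lra)).
    destruct (Key N HN2) as [K1 _].
    apply Rabs_lt_between in Hdel. lra.
  - destruct (Rle_or_lt Sl dy) as [|Hc]; auto. exfalso.
    destruct (Dy (Sl - dy) ltac:(lra)) as [del Hdel].
    destruct (archimed_cor1 (del / (y - x))) as [N [HN1 HN2]].
    { apply Rdiv_lt_0_compat; [apply cond_pos | lra]. }
    assert (HN' : 0 < INR N) by (apply lt_0_INR; lia).
    assert (Hh : 0 < (y - x) / INR N) by (apply Rdiv_lt_0_compat; lra).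
    assert (Hh2 : (y - x) / INR N < del).
    { apply (Rmult_lt_reg_r (/ (y - x))). apply Rinv_0_lt_compat; lra.
      replace ((y - x) / INR N * / (y - x)) with (/ INR N) by (field; lra). exact HN1. }
    specialize (Hdel (- ((y - x) / INR N)) ltac:(lra) ltac:(rewrite Rabs_Ropp, Rabs_right; lra)).
    destruct (Key N HN2) as [_ K2].
    apply Rabs_lt_between in Hdel. lra.
Qed.

End Conv.

Lemma DG x : 1 < x -> Derive Gamma x = G1 x.
Proof. intros. apply is_derive_unique. apply Gamma_deriv; auto. Qed.

Lemma psi_eq x : 1 < x -> digamma x = G1 x / Gamma x.
Proof. intros. unfold digamma. rewrite DG; auto. Qed.

Lemma G1_rec x : 1 < x -> G1 (x + 1) = Gamma x + x * G1 x.
Proof.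
  intros Hx.
  assert (H1 : is_derive (fun y => Gamma (y + 1)) x (G1 (x + 1))).
  { assert (H := is_derive_comp Gamma (fun y => y + 1) x (G1 (x+1)) 1).
    assert (H0 : is_derive (fun y => Gamma (y+1)) x (scal 1 (G1 (x+1)))).
    { apply H. apply Gamma_deriv; lra. auto_derive; auto. }
    unfold scal in H0; simpl in H0; unfold mult in H0; simpl in H0; rewrite Rmult_1_l in H0; exact H0. }
  assert (H2 : is_derive (fun y => y * Gamma y) x (1 * Gamma x + x * G1 x)).
  { apply (is_derive_mult (fun y => y) Gamma). auto_derive; auto. apply Gamma_deriv; auto.
    intros; unfold mult; simpl; ring. }
  assert (H3 : is_derive (fun y => Gamma (y + 1)) x (1 * Gamma x + x * G1 x)).
  { apply (is_derive_ext_loc (fun y => y * Gamma y)); auto.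
    assert (Hl : locally x (fun y => 1 < y)).
    { assert (Hp : 0 < x - 1) by lra. exists (mkposreal _ Hp). intros z Hz.
      unfold ball in Hz; simpl in Hz; unfold AbsRing_ball, abs, minus, plus, opp in Hz; simpl in Hz.
      apply Rabs_lt_between in Hz. lra. }
    apply (filter_imp (fun y => 1 < y)); auto. intros y Hy. symmetry. apply Gamma_rec; auto. }
  assert (E := is_derive_unique _ _ _ H1). assert (E' := is_derive_unique _ _ _ H3). rewrite E in E'.
  rewrite E'. ring.
Qed.

Lemma psi_rec x : 1 < x -> digamma (x + 1) = digamma x + / x.
Proof.
  intros Hx. rewrite !psi_eq by lra. rewrite G1_rec, Gamma_rec by auto.
  assert (P := Gamma_pos x Hx). field. lra.
Qed.

Lemma lnG_deriv x : 1 < x -> is_derive (fun y => ln (Gamma y)) x (digamma x).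
Proof.
  intros Hx. rewrite psi_eq by auto. assert (P := Gamma_pos x Hx).
  assert (H := is_derive_comp ln Gamma x (/ Gamma x) (G1 x)).
  assert (H0 : is_derive (fun y => ln (Gamma y)) x (scal (G1 x) (/ Gamma x))).
  { apply H. auto_derive; auto. Req; field; lra. apply Gamma_deriv; auto. }
  unfold scal in H0; simpl in H0; unfold mult in H0; simpl in H0.
  replace (G1 x / Gamma x) with (G1 x * / Gamma x) by (unfold Rdiv; auto). exact H0.
Qed.

Lemma lnG_mid u w : 1 < u -> 1 < w -> 2 * ln (Gamma ((u + w) / 2)) <= ln (Gamma u) + ln (Gamma w).
Proof.
  intros Hu Hw. assert (Pu := Gamma_pos u Hu). assert (Pw := Gamma_pos w Hw).
  assert (Pm := Gamma_pos ((u + w) / 2) ltac:(lra)).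
  rewrite <- ln_mult by auto.
  replace (2 * ln (Gamma ((u + w) / 2))) with (ln (Gamma ((u + w) / 2) ^ 2)).
  apply ln_le. apply pow_lt; auto. apply Gamma_lc; auto.
  simpl. rewrite Rmult_1_r, ln_mult by auto. ring.
Qed.

Lemma psi_slope x y : 1 < x -> x < y ->
  digamma x <= (ln (Gamma y) - ln (Gamma x)) / (y - x) <= digamma y.
Proof.
  intros Hx Hxy. apply (conv_slope (fun z => ln (Gamma z)) 1 x y).
  intros; apply lnG_mid; auto. auto. auto.
  apply lnG_deriv; auto. apply lnG_deriv; lra.
Qed.

Lemma psi_mono x y : 1 < x -> x <= y -> digamma x <= digamma y.
Proof.
  intros Hx [H|H]. assert (S := psi_slope x y Hx H). lra. subst; lra.
Qed.

Lemma psi_int_bounds (r : R) : 1 < r -> ln r - / r <= digamma r <= ln r.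
Proof.
  intros Hr. assert (S := psi_slope r (r + 1) Hr ltac:(lra)).
  rewrite Gamma_rec in S by auto. assert (P := Gamma_pos r Hr).
  rewrite ln_mult in S by lra.
  replace ((ln r + ln (Gamma r) - ln (Gamma r)) / (r + 1 - r)) with (ln r) in S by (field_simplify; [reflexivity| lra]).
  rewrite psi_rec in S by auto. lra.
Qed.

Fixpoint ssum (f : nat -> R) (N : nat) : R :=
  match N with 0%nat => 0 | S n => ssum f n + f n end.

Lemma ssum_ext f g N : (forall k, (k < N)%nat -> f k = g k) -> ssum f N = ssum g N.
Proof. induction N; intros H; simpl; auto. rewrite IHN, H; auto. Qed.

Lemma ssum_lin f g a b N : ssum (fun k => a * f k + b * g k) N = a * ssum f N + b * ssum g N.
Proof. induction N; simpl. ring. rewrite IHN. ring. Qed.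

Lemma ssum_le f g N : (forall k, (k < N)%nat -> f k <= g k) -> ssum f N <= ssum g N.
Proof. induction N; intros H; simpl. lra. apply Rplus_le_compat. apply IHN; auto. apply H; lia. Qed.

Lemma ssum_abs f N : Rabs (ssum f N) <= ssum (fun k => Rabs (f k)) N.
Proof. induction N; simpl. rewrite Rabs_R0; lra. eapply Rle_trans. apply Rabs_triang. lra. Qed.

Lemma ssum_shift F m N : ssum (fun k => F (m + k)%nat) N = ssum F (m + N) - ssum F m.
Proof. induction N. simpl. rewrite Nat.add_0_r. ring. rewrite Nat.add_succ_r. simpl. rewrite IHN. ring. Qed.

Lemma ssum_sum_f F M : ssum F (S M) = sum_f_R0 F M.
Proof. induction M. simpl. ring. simpl. rewrite <- IHM. simpl. ring. Qed.

Lemma le_lim a b C : (forall N : nat, a <= b + C / (INR N + 1)) -> a <= b.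
Proof.
  intros H. destruct (Rle_or_lt a b) as [|Hc]; auto. exfalso.
  destruct (Rle_or_lt C 0) as [HC|HC].
  - specialize (H 0%nat). simpl in H. assert (C / (0 + 1) <= 0) by (unfold Rdiv; rewrite Rplus_0_l, Rinv_1; lra). lra.
  - destruct (archimed_cor1 ((a - b) / C)) as [N [HN1 HN2]]. apply Rdiv_lt_0_compat; lra.
    specialize (H N). assert (HN : 0 < INR N) by (apply lt_0_INR; lia).
    assert (C / (INR N + 1) < a - b).
    { apply Rlt_trans with (C / INR N).
      apply Rmult_lt_compat_l; auto. apply Rinv_lt_contravar; nra.
      apply (Rmult_lt_reg_r (/ C)). apply Rinv_0_lt_compat; auto.
      replace (C / INR N * / C) with (/ INR N) by (field; lra). exact HN1. }
    lra.
Qed.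

Lemma harmonic_S m : harmonic (S (S m)) = harmonic (S m) + / INR (S (S m)).
Proof. unfold harmonic. simpl Init.Nat.pred. simpl sum_f_R0 at 1. reflexivity. Qed.

Lemma psi_int k : digamma (INR k + 2) = digamma 2 - 1 + harmonic (S k).
Proof.
  induction k.
  - simpl. unfold harmonic. simpl. replace (0 + 2) with 2 by ring. field.
  - rewrite harmonic_S, S_INR.
    replace (INR k + 1 + 2) with ((INR k + 2) + 1) by ring.
    assert (0 <= INR k) by apply pos_INR.
    rewrite psi_rec by lra. rewrite IHk. rewrite !S_INR. replace (INR k + 1 + 1) with (INR k + 2) by ring. ring.
Qed.

Lemma euler_val : euler_gamma = 1 - digamma 2.
Proof.
  unfold euler_gamma.
  assert (L : is_lim_seq (fun m => harmonic m - ln (INR m)) (1 - digamma 2)).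
  { apply is_lim_seq_spec. intros eps.
    destruct (archimed_cor1 eps (cond_pos eps)) as [N [HN1 HN2]].
    exists (S N). intros m Hm. destruct m as [|m]. lia. destruct m as [|m]. lia.
    assert (Hk := psi_int m).
    assert (0 <= INR m) by apply pos_INR.
    assert (B := psi_int_bounds (INR m + 2) ltac:(lra)).
    rewrite harmonic_S. rewrite Hk in B.
    replace (INR (S (S m))) with (INR m + 2) by (rewrite !S_INR; ring).
    assert (HN : / (INR m + 2) < eps).
    { apply Rle_lt_trans with (/ INR N); auto. apply Rinv_le_contravar. apply lt_0_INR; lia.
      assert (INR N <= INR (S m)) by (apply le_INR; lia). rewrite S_INR in *. lra. }
    assert (0 < / (INR m + 2)) by (apply Rinv_0_lt_compat; lra).
    apply Rabs_lt_between. lra. }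
  rewrite (is_lim_seq_unique _ _ L). reflexivity.
Qed.

Lemma psi_c n : (1 <= n)%nat -> digamma (2 * INR n + 1) = harmonic (2 * n) - euler_gamma.
Proof.
  intros Hn. rewrite euler_val.
  replace (2 * INR n + 1) with (INR (2 * n - 1) + 2).
  rewrite psi_int. replace (S (2 * n - 1)) with (2 * n)%nat by lia. ring.
  rewrite minus_INR by lia. rewrite mult_INR. simpl. ring.
Qed.

Lemma psi_shift x N : 1 < x -> digamma (x + INR N) = digamma x + ssum (fun k => / (x + INR k)) N.
Proof.
  intros Hx. induction N.
  - simpl. rewrite Rplus_0_r. ring.
  - simpl ssum. rewrite S_INR. replace (x + (INR N + 1)) with ((x + INR N) + 1) by ring.
    assert (0 <= INR N) by apply pos_INR.
    rewrite psi_rec by lra. rewrite IHN. ring.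
Qed.

Definition F2 (j : nat) := / (INR j + 1) ^ 2.

Lemma ssumF2_le M : 0 <= ssum F2 M <= PI^2/6.
Proof.
  split.
  - induction M. simpl; lra. simpl. unfold F2 at 2.
    assert (0 < /(INR M + 1)^2) by (apply Rinv_0_lt_compat; assert (0 <= INR M) by apply pos_INR; nra). lra.
  - destruct M. simpl. assert (H := PI_RGT_0). nra.
    rewrite ssum_sum_f. assert (H := basel_bound M). unfold F2. lra.
Qed.

Lemma ssumF2_tail M : (1 <= M)%nat -> 0 <= PI^2/6 - ssum F2 M <= 9 / (INR M + 1).
Proof.
  intros HM. destruct M. lia. rewrite ssum_sum_f. assert (H := basel_bound M).
  rewrite S_INR. replace (INR M + 1 + 1) with (INR M + 2) by ring. exact H.
Qed.

Section Tri.
Variable n : nat.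
Hypothesis Hn : (1 <= n)%nat.
Let c := 2 * INR n + 1.
Let T := PI^2/6 - ssum F2 (2 * n).

Lemma c_ge3 : 3 <= c.
Proof. unfold c. assert (1 <= INR n) by (apply (le_INR 1); auto). simpl in H. lra. Qed.

Lemma psi_diff h N : Rabs h <= 1/2 ->
  digamma (c + h) - digamma c = (digamma (c + h + INR N) - digamma (c + INR N))
    + h * ssum (fun k => / ((c + INR k) * (c + h + INR k))) N.
Proof.
  intros Hh. assert (C := c_ge3). apply Rabs_le_between in Hh.
  rewrite psi_shift by lra. rewrite (psi_shift c) by lra.
  assert (E : ssum (fun k => / (c + INR k)) N - ssum (fun k => / (c + h + INR k)) N =
              h * ssum (fun k => / ((c + INR k) * (c + h + INR k))) N).
  { replace (ssum (fun k => / (c + INR k)) N - ssum (fun k => / (c + h + INR k)) N) with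
      (1 * ssum (fun k => / (c + INR k)) N + (-1) * ssum (fun k => / (c + h + INR k)) N) by ring.
    rewrite <- ssum_lin.
    replace (h * ssum (fun k => / ((c + INR k) * (c + h + INR k))) N) with
      (h * ssum (fun k => / ((c + INR k) * (c + h + INR k))) N + 0 * ssum (fun k => 0) N) by ring.
    rewrite <- ssum_lin. apply ssum_ext. intros k _. assert (0 <= INR k) by apply pos_INR.
    field. lra. }
  lra.
Qed.

Lemma RN_bound h N : Rabs h <= 1/2 ->
  Rabs (digamma (c + h + INR N) - digamma (c + INR N)) <= / (INR N + 1).
Proof.
  intros Hh. assert (C := c_ge3). apply Rabs_le_between in Hh. assert (P : 0 <= INR N) by apply pos_INR.
  assert (M1 : digamma (c + INR N - 1) <= digamma (c + h + INR N)) by (apply psi_mono; lra).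
  assert (M2 : digamma (c + h + INR N) <= digamma (c + INR N + 1)) by (apply psi_mono; lra).
  rewrite psi_rec in M2 by lra.
  assert (R1 := psi_rec (c + INR N - 1) ltac:(lra)). replace (c + INR N - 1 + 1) with (c + INR N) in R1 by ring.
  assert (I1 : / (c + INR N) <= / (INR N + 1)) by (apply Rinv_le_contravar; lra).
  assert (I2 : / (c + INR N - 1) <= / (INR N + 1)) by (apply Rinv_le_contravar; lra).
  apply Rabs_le_between. lra.
Qed.

Lemma sum_cmp h N : Rabs h <= 1/2 ->
  Rabs (ssum (fun k => / ((c + INR k) * (c + h + INR k))) N - ssum (fun k => F2 (2 * n + k)) N)
    <= Rabs h * (PI^2/6).
Proof.
  intros Hh. assert (C := c_ge3). apply Rabs_le_between in Hh.
  replace (ssum (fun k => / ((c + INR k) * (c + h + INR k))) N - ssum (fun k => F2 (2 * n + k)) N)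
    with (ssum (fun k => 1 * (/ ((c + INR k) * (c + h + INR k))) + (-1) * F2 (2 * n + k)) N)
    by (rewrite ssum_lin; ring).
  eapply Rle_trans. apply ssum_abs.
  apply Rle_trans with (ssum (fun k => Rabs h * F2 (2 * n + k)) N).
  - apply ssum_le. intros k _. unfold F2. rewrite plus_INR, mult_INR. fold (INR 2).
    replace (INR 2) with 2 by (simpl; ring). fold c.
    assert (0 <= INR k) by apply pos_INR.
    replace (2 * INR n + INR k + 1) with (c + INR k) by (unfold c; ring).
    replace (1 * / ((c + INR k) * (c + h + INR k)) + -1 * / (c + INR k) ^ 2) with
      ((- h) * (/ (c + INR k) ^ 2 * / (c + h + INR k))) by (field; lra).
    rewrite Rabs_mult, Rabs_Ropp. apply Rmult_le_compat_l. apply Rabs_pos.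
    rewrite Rabs_right.
    2:{ left. apply Rmult_lt_0_compat; apply Rinv_0_lt_compat; nra. }
    rewrite <- (Rmult_1_r (/ (c + INR k) ^ 2)) at 2. apply Rmult_le_compat_l.
    left; apply Rinv_0_lt_compat; nra.
    rewrite <- Rinv_1. apply Rinv_le_contravar; lra.
  - replace (ssum (fun k => Rabs h * F2 (2 * n + k)) N) with
      (Rabs h * ssum (fun k => F2 (2 * n + k)) N + 0 * ssum (fun k => 0) N) by (rewrite <- ssum_lin; apply ssum_ext; intros; ring).
    rewrite Rmult_0_l, Rplus_0_r. apply Rmult_le_compat_l. apply Rabs_pos.
    rewrite ssum_shift. assert (A := ssumF2_le (2 * n + N)). assert (B := ssumF2_le (2 * n)). lra.
Qed.

Lemma tail_cmp N : Rabs (ssum (fun k => F2 (2 * n + k)) N - T) <= 9 / (INR N + 1).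
Proof.
  unfold T. rewrite ssum_shift.
  assert (H := ssumF2_tail (2 * n + N) ltac:(lia)).
  assert (INR N <= INR (2 * n + N)) by (apply le_INR; lia).
  assert (0 <= INR N) by apply pos_INR.
  assert (9 / (INR (2 * n + N) + 1) <= 9 / (INR N + 1)).
  { apply Rmult_le_compat_l. lra. apply Rinv_le_contravar; lra. }
  rewrite Rabs_left1 by lra. lra.
Qed.

Lemma quot_bound h : h <> 0 -> Rabs h <= 1/2 ->
  Rabs ((digamma (c + h) - digamma c) / h - T) <= Rabs h * 3.
Proof.
  intros H0 Hh. assert (Ha : 0 < Rabs h) by (apply Rabs_pos_lt; auto).
  apply (le_lim _ _ (/ Rabs h + 9)). intros N.
  rewrite (psi_diff h N Hh).
  set (R := digamma (c + h + INR N) - digamma (c + INR N)).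
  set (S1 := ssum (fun k => / ((c + INR k) * (c + h + INR k))) N).
  set (S2 := ssum (fun k => F2 (2 * n + k)) N).
  replace ((R + h * S1) / h - T) with (R / h + (S1 - S2) + (S2 - T)) by (field; auto).
  assert (A1 : Rabs (R / h) <= / Rabs h / (INR N + 1)).
  { unfold Rdiv. rewrite Rabs_mult, Rabs_Rinv by auto. rewrite Rmult_comm. apply Rmult_le_compat_l.
    left; apply Rinv_0_lt_compat; auto. apply RN_bound; auto. }
  assert (A2 : Rabs (S1 - S2) <= Rabs h * (PI^2/6)) by (apply sum_cmp; auto).
  assert (A3 : Rabs (S2 - T) <= 9 / (INR N + 1)) by apply tail_cmp.
  assert (P4 := PI_4). assert (P0 := PI_RGT_0).
  assert (A4 : Rabs h * (PI^2/6) <= Rabs h * 3) by (apply Rmult_le_compat_l; [lra | nra]).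
  assert (0 <= INR N) by apply pos_INR.
  replace ((/ Rabs h + 9) / (INR N + 1)) with (/ Rabs h / (INR N + 1) + 9 / (INR N + 1)) by (field; lra).
  eapply Rle_trans. apply Rabs_triang. eapply Rle_trans. apply Rplus_le_compat_r. apply Rabs_triang. lra.
Qed.

Lemma psi_deriv_c : is_derive digamma c T.
Proof.
  apply is_derive_Reals. intros eps Heps.
  assert (Hd : 0 < Rmin (1/2) (eps / 6)) by (apply Rmin_glb_lt; lra).
  exists (mkposreal _ Hd). intros h H0 Hh. simpl in Hh.
  assert (Hh1 : Rabs h <= 1/2) by (left; apply Rlt_le_trans with (1 := Hh); apply Rmin_l).
  assert (Hh2 : Rabs h < eps / 6) by (apply Rlt_le_trans with (1 := Hh); apply Rmin_r).
  assert (Q := quot_bound h H0 Hh1). lra.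
Qed.

Lemma trigamma_c : trigamma c = T.
Proof. unfold trigamma. apply is_derive_unique. apply psi_deriv_c. Qed.

End Tri.

Lemma ssum_first f n : ssum f (S n) = f 0%nat + ssum (fun k => f (S k)) n.
Proof. induction n. simpl. ring. change (ssum f (S (S n))) with (ssum f (S n) + f (S n)). rewrite IHn. simpl. ring. Qed.

Lemma ssum_rev G n : ssum (fun k => G (n - 1 - k)%nat) n = ssum G n.
Proof.
  induction n. reflexivity.
  rewrite ssum_first. replace (S n - 1 - 0)%nat with n by lia.
  rewrite (ssum_ext _ (fun k => G (n - 1 - k)%nat)) by (intros; f_equal; lia).
  rewrite IHn. simpl. ring.
Qed.

Lemma ssum_sym G n : ssum (fun k => G (n - 1 - k)%nat + G (n + k)%nat) n = ssum G (2 * n).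
Proof.
  replace (ssum (fun k => G (n - 1 - k)%nat + G (n + k)%nat) n) with
    (1 * ssum (fun k => G (n - 1 - k)%nat) n + 1 * ssum (fun k => G (n + k)%nat) n)
    by (rewrite <- ssum_lin; apply ssum_ext; intros; ring).
  rewrite ssum_rev, ssum_shift. replace (n + n)%nat with (2 * n)%nat by lia. ring.
Qed.

Definition F1 (j : nat) := / (INR j + 1).

Lemma harm_ssum m : (1 <= m)%nat -> harmonic m = ssum F1 m.
Proof.
  intros Hm. unfold harmonic. destruct m. lia. simpl Init.Nat.pred. rewrite ssum_sum_f.
  apply sum_eq. intros. unfold F1. rewrite S_INR. reflexivity.
Qed.

Theorem mainTheorem7 (n : nat) (hn : (1 <= n)%nat) :
  sum_f_R0 (fun k => (2 * INR k + 1) ^ 2 /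
                     ((INR n - INR k) ^ 2 * (INR n + INR k + 1) ^ 2)) (n - 1)
  = PI ^ 2 / 6 - 2 * euler_gamma / (2 * INR n + 1)
    - 2 / (2 * INR n + 1) * digamma (2 * INR n + 1)
    - trigamma (2 * INR n + 1).
Proof.
  rewrite trigamma_c by auto. rewrite psi_c by auto. rewrite harm_ssum by lia.
  replace (n - 1)%nat with (Init.Nat.pred n) by lia.
  destruct n as [|m]. lia. simpl Init.Nat.pred. rewrite <- ssum_sum_f.
  set (c := 2 * INR (S m) + 1).
  assert (Hc : 0 < c) by (unfold c; assert (0 <= INR (S m)) by apply pos_INR; lra).
  rewrite (ssum_ext _ (fun k => 1 * (F2 (S m - 1 - k)%nat + F2 (S m + k)%nat) + (- (2 / c)) * (F1 (S m - 1 - k)%nat + F1 (S m + k)%nat))).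
  2:{ intros k Hk. unfold F1, F2. rewrite !plus_INR, !minus_INR by lia. simpl (INR 1).
      assert (INR k + 1 <= INR (S m)) by (rewrite <- S_INR; apply le_INR; lia).
      assert (0 <= INR k) by apply pos_INR.
      unfold c. field. repeat split; lra. }
  rewrite ssum_lin, !ssum_sym. field. lra.
Qed.
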